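(* Let $V$ be a finite set of variables, $\mathcal C$ a set of betweenness constraints over $V$, and $\kappa\ge 0$ an integer. Apply the following reduction rule as long as possible: if $\mathcal C$ contains a complete triple of constraints, delete these three constraints from $\mathcal C$ and delete from $V$ every variable that appears only in constraints of that triple. Let $(V',\mathcal C')$ be the resulting instance. Then $(V,\mathcal C)$ (with parameter $\kappa$) is a Yes-instance of Betweenness Above Tight Lower Bound if and only if $(V',\mathcal C')$ (with parameter $\kappa$) is a Yes-instance.
   Context: A betweenness constraint over $V$ is written $(v_i,\{v_j,v_k\})$ with $v_i,v_j,v_k\in V$ distinct, meaning ''$v_i$ is between $v_j$ and $v_k$''. A bijection $\alpha:V\to\{1,\dots,|V|\}$ (a linear arrangement) satisfies $(v_i,\{v_j,v_k\})$ if $\alpha(v_j)<\alpha(v_i)<\alpha(v_k)$ or $\alpha(v_k)<\alpha(v_i)<\alpha(v_j)$. For a constraint $C$, $vars(C)$ is its set of three variables. Three distinct constraints $A,B,C\in\mathcal C$ form a complete triple if $vars(A)=vars(B)=vars(C)$. Betweenness Above Tight Lower Bound (BATLB): given $V$, $\mathcal C$ and integer $\kappa\ge0$, the instance is a Yes-instance iff there is a bijection $\alpha:V\to\{1,\dots,|V|\}$ satisfying at least $|\mathcal C|/3+\kappa$ constraints of $\mathcal C$. *)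

(* Defs.v *)
From mathcomp Require Import all_boot.
Set Implicit Arguments. Unset Strict Implicit. Unset Printing Implicit Defensive.

Section Betweenness.
Variable T : finType.

(* A betweenness constraint (v_i, {v_j, v_k}) is represented as the pair
   (v_i, {v_j, v_k}) : T * {set T}; well-formed when the set has exactly two
   elements and does not contain v_i. *)
Definition constraint := (T * {set T})%type.

Definition wf_constraint (c : constraint) : bool :=
  (#|c.2| == 2) && (c.1 \notin c.2).

Definition vars (c : constraint) : {set T} := c.1 |: c.2.

Definition wf_instance (V : {set T}) (C : {set constraint}) : Prop :=
  forall c, c \in C -> wf_constraint c /\ vars c \subset V.

Definition arrangement (V : {set T}) (alpha : T -> nat) : Prop :=
  {in V &, injective alpha} /\
  (forall x, x \in V -> 1 <= alpha x <= #|V|) /\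
  (forall n, 1 <= n <= #|V| -> exists2 x, x \in V & alpha x = n).

Definition satisfies (alpha : T -> nat) (c : constraint) : bool :=
  [exists j in c.2, exists k in c.2, (alpha j < alpha c.1) && (alpha c.1 < alpha k)].

(* Yes-instance of BATLB: some arrangement satisfies >= |C|/3 + kappa
   constraints, i.e. 3 * #sat >= |C| + 3 kappa. *)
Definition BATLB_yes (V : {set T}) (C : {set constraint}) (kappa : nat) : Prop :=
  exists alpha : T -> nat, arrangement V alpha /\
    #|C| + 3 * kappa <= 3 * #|[set c in C | satisfies alpha c]|.

Definition complete_triple (C : {set constraint}) (A B D : constraint) : Prop :=
  [/\ A \in C, B \in C, D \in C,
      [/\ A != B, A != D & B != D] &
      vars A = vars B /\ vars A = vars D].

Definition has_complete_triple (C : {set constraint}) : Prop :=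
  exists A B D, complete_triple C A B D.

Definition reduce_step (V : {set T}) (C : {set constraint})
    (V' : {set T}) (C' : {set constraint}) : Prop :=
  exists A B D, complete_triple C A B D /\
    C' = C :\: [set A; B; D] /\
    V' = V :\: [set x in vars A | [forall c in C', x \notin vars c]].

Inductive reduces : {set T} -> {set constraint} -> {set T} -> {set constraint} -> Prop :=
| reduces_refl V C : reduces V C V C
| reduces_step V C V1 C1 V2 C2 :
    reduce_step V C V1 C1 -> reduces V1 C1 V2 C2 -> reduces V C V2 C2.

End Betweenness.

(* Main.v *)
Require Import Defs.
From mathcomp Require Import all_boot.
From mathcomp Require Import zify.

Set Implicit Arguments. Unset Strict Implicit. Unset Printing Implicit Defensive.

Definition Yinj (T : finType) (V : {set T}) (C : {set constraint T}) k :=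
  exists alpha : T -> nat, {in V &, injective alpha} /\
    #|C| + 3 * k <= 3 * #|[set c in C | satisfies alpha c]|.

Lemma sat_ext (T : finType) (alpha beta : T -> nat) (c : constraint T) :
  {in vars c &, forall x y, (alpha x < alpha y) = (beta x < beta y)} ->
  satisfies alpha c = satisfies beta c.
Proof.
move=> H; rewrite /satisfies; apply: eq_existsb => j.
case jin: (j \in c.2) => //=; apply: eq_existsb => k.
case kin: (k \in c.2) => //=.
have c1V : c.1 \in vars c by rewrite /vars setU11.
have jV : j \in vars c by rewrite /vars setU1r.
have kV : k \in vars c by rewrite /vars setU1r.
by rewrite (H j c.1) // (H c.1 k).
Qed.

Lemma conv (T : finType) (V : {set T}) (C : {set constraint T}) k :
  wf_instance V C -> (BATLB_yes V C k <-> Yinj V C k).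
Proof.
move=> wf; split.
  by case=> alpha [[inj _] h]; exists alpha.
case=> alpha [inj h].
pose beta x := #|[set y in V | alpha y <= alpha x]|.
have mono : {in V &, forall x y, (alpha x < alpha y) = (beta x < beta y)}.
  move=> x y xV yV; apply/idP/idP.
    move=> lt; apply: proper_card; rewrite properE; apply/andP; split.
      apply/subsetP=> z; rewrite !inE => /andP[-> h'].
      exact: leq_trans h' (ltnW lt).
    apply/subsetPn; exists y; rewrite !inE yV /=; [by [] | by rewrite -ltnNge].
  apply: contraLR; rewrite -!leqNgt => le.
  apply: subset_leq_card; apply/subsetP => z; rewrite !inE => /andP[-> h'].
  exact: leq_trans h' le.
have injb : {in V &, injective beta}.
  move=> x y xV yV e; case: (ltngtP (alpha x) (alpha y)) => [lt|lt|].
  - by move: lt; rewrite (mono x y xV yV) e ltnn.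
  - by move: lt; rewrite (mono y x yV xV) e ltnn.
  - exact: inj.
have rng : forall x, x \in V -> 1 <= beta x <= #|V|.
  move=> x xV; apply/andP; split.
    by apply/card_gt0P; exists x; rewrite inE xV leqnn.
  by apply: subset_leq_card; apply/subsetP=> z; rewrite inE => /andP[].
exists beta; split; first split; [exact: injb | split; first exact: rng |].
  move=> n hn.
  pose s := [seq beta x | x <- enum V].
  have us : uniq s.
    rewrite map_inj_in_uniq ?enum_uniq // => x y; rewrite !mem_enum; exact: injb.
  have sub : {subset s <= iota 1 #|V|}.
    move=> m /mapP[x xin ->]; rewrite mem_enum in xin.
    rewrite mem_iota; have := rng x xin; lia.
  have [_ eqs] := uniq_min_size us sub ltac:(by rewrite size_iota size_map -cardE).
  have : n \in s by rewrite eqs mem_iota; lia.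
  by case/mapP => x xin ->; exists x; rewrite // -mem_enum.
have -> : [set c in C | satisfies beta c] = [set c in C | satisfies alpha c].
  apply/setP=> c; rewrite !inE; case cC: (c \in C) => //=.
  symmetry; apply: sat_ext => x y xv yv; apply: mono;
    by apply: (subsetP (wf c cC).2).
exact: h.
Qed.

Lemma wf_split (T : finType) (c : constraint T) :
  wf_constraint c -> c.2 = vars c :\ c.1.
Proof. by case/andP=> _ h; rewrite /vars setU1K. Qed.

Lemma center_inj (T : finType) (c c' : constraint T) :
  wf_constraint c -> wf_constraint c' -> vars c = vars c' -> c.1 = c'.1 -> c = c'.
Proof.
move=> w w' ev e1; apply: injective_projections => //.
by rewrite (wf_split w) (wf_split w') ev e1.
Qed.

Lemma sat3 (T : finType) (alpha : T -> nat) (c : constraint T) p q :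
  c.2 = [set p; q] ->
  satisfies alpha c = ((alpha p < alpha c.1 < alpha q) || (alpha q < alpha c.1 < alpha p)).
Proof.
move=> e; rewrite /satisfies e; apply/idP/idP.
  case/existsP => j /andP[jin /existsP[k /andP[kin /andP[h1 h2]]]].
  move: jin kin h1 h2; rewrite !inE => /orP[]/eqP-> /orP[]/eqP-> h1 h2; lia.
case/orP => /andP[h1 h2]; apply/existsP.
  exists p; rewrite !inE eqxx /=; apply/existsP; exists q.
  by rewrite !inE eqxx orbT h1 h2.
exists q; rewrite !inE eqxx orbT /=; apply/existsP; exists p.
by rewrite !inE eqxx h1 h2.
Qed.

Lemma ar (x y z : nat) : x != y -> x != z -> y != z ->
  ((y<x<z)||(z<x<y)) + ((x<y<z)||(z<y<x)) + ((x<z<y)||(y<z<x)) = 1.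
Proof. move=> *. lia. Qed.

Lemma triple (T : finType) (alpha : T -> nat) (A B D : constraint T) :
  wf_constraint A -> wf_constraint B -> wf_constraint D ->
  vars A = vars B -> vars A = vars D -> A != B -> A != D -> B != D ->
  {in vars A &, injective alpha} ->
  satisfies alpha A + satisfies alpha B + satisfies alpha D = 1.
Proof.
move=> wA wB wD eAB eAD AB AD BD inj.
set a := A.1; set b := B.1; set d := D.1.
have ab : a != b by apply: contra_neq AB => e; apply: center_inj.
have ad : a != d by apply: contra_neq AD => e; apply: center_inj.
have bd : b != d by apply: contra_neq BD => e; apply: center_inj; rewrite // -eAB.
have aW : a \in vars A by rewrite /vars setU11.
have bW : b \in vars A by rewrite eAB /vars setU11.
have dW : d \in vars A by rewrite eAD /vars setU11.
have cardW : #|vars A| = 3.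
  by rewrite /vars cardsU1; case/andP: wA => /eqP -> ->.
have E3 : [set a; b; d] = a |: (b |: [set d]) by apply/setP=> x; rewrite !inE orbA.
have W3 : vars A = [set a; b; d].
  apply/esym/eqP; rewrite eqEcard; apply/andP; split.
    by apply/subsetP => x; rewrite E3 => /setU1P [->|/set2P [] ->].
  rewrite cardW E3 !cardsU1 cards1 !inE (negbTE ab) (negbTE ad) (negbTE bd).
  by [].
have ba : b != a by rewrite eq_sym.
have da : d != a by rewrite eq_sym.
have db : d != b by rewrite eq_sym.
have hA : A.2 = [set b; d].
  rewrite (wf_split wA) W3; apply/setP=> w; rewrite !inE.
  by case: (eqVneq w a) => [->|] /=; rewrite ?(negbTE ab) ?(negbTE ad) ?orbF.
have hB : B.2 = [set a; d].
  rewrite (wf_split wB) -eAB W3; apply/setP=> w; rewrite !inE.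
  by case: (eqVneq w b) => [->|] /=; rewrite ?(negbTE ba) ?(negbTE bd) ?orbF.
have hD : D.2 = [set a; b].
  rewrite (wf_split wD) -eAD W3; apply/setP=> w; rewrite !inE.
  by case: (eqVneq w d) => [->|] /=; rewrite ?(negbTE da) ?(negbTE db) ?orbF.
rewrite (sat3 _ hA) (sat3 _ hB) (sat3 _ hD) -/a -/b -/d.
apply: ar.
- by apply: contra_neq ab => e; apply: inj.
- by apply: contra_neq ad => e; apply: inj.
- by apply: contra_neq bd => e; apply: inj.
Qed.

Lemma card_sel1 (T : finType) (P : pred T) (x : T) (S : {set T}) :
  x \notin S -> #|[set c in x |: S | P c]| = P x + #|[set c in S | P c]|.
Proof.
move=> xS; case Px: (P x).
  have -> : [set c in x |: S | P c] = x |: [set c in S | P c].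
    by apply/setP=> c; rewrite !inE; case: (eqVneq c x) => [->|] //=; rewrite Px.
  by rewrite cardsU1 inE (negbTE xS).
have -> : [set c in x |: S | P c] = [set c in S | P c].
  apply/setP=> c; rewrite !inE; case: (eqVneq c x) => [->|] //=.
  by rewrite Px (negbTE xS).
by [].
Qed.

Lemma count_step (T : finType) (P : pred T) (C : {set T}) (A B D : T) :
  A \in C -> B \in C -> D \in C -> A != B -> A != D -> B != D ->
  #|[set c in C | P c]| = #|[set c in C :\: [set A; B; D] | P c]| + (P A + P B + P D)
  /\ #|C| = #|C :\: [set A; B; D]| + 3.
Proof.
move=> AC BC DC AB AD BD.
have E3 : [set A; B; D] = A |: (B |: [set D]) by apply/setP=> x; rewrite !inE orbA.
have sub : [set A; B; D] \subset C.
  by apply/subsetP=> x; rewrite !inE => /orP[/orP[]|] /eqP ->.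
split.
  rewrite -(cardsID [set A; B; D] [set c in C | P c]) addnC.
  congr (_ + _).
    by apply: eq_card => c; rewrite !inE andbA.
  have -> : [set c in C | P c] :&: [set A; B; D] = [set c in [set A; B; D] | P c].
    apply/setP=> c; rewrite !inE andbC; case cin: (_ || _) => //=.
    by rewrite (subsetP sub) // !inE.
  rewrite E3 card_sel1; last by rewrite !inE negb_or AB AD.
  rewrite card_sel1; last by rewrite !inE.
  case PD: (P D).
    have -> : [set c in [set D] | P c] = [set D].
      by apply/setP=> c; rewrite !inE; case: (eqVneq c D) => [->|] //=.
    by rewrite cards1 addnA.
  have -> : [set c in [set D] | P c] = set0.
    by apply/setP=> c; rewrite !inE; case: (eqVneq c D) => [->|] //=.
  by rewrite cards0 addnA.
rewrite -(cardsID [set A; B; D] C) (setIidPr sub) E3 !cardsU1 cards1 !inE.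
by rewrite negb_or AB AD BD addnC.
Qed.

Lemma ar1 a b k : a + 3 + 3*k <= 3*(b+1) -> a + 3*k <= 3*b.
Proof. lia. Qed.
Lemma ar2 a b k : a + 3*k <= 3*b -> a + 3 + 3*k <= 3*(b+1).
Proof. lia. Qed.
Lemma ar3 M r a : a <= M -> a = M.+1 + r -> False.
Proof. lia. Qed.

Lemma step (T : finType) (V V1 : {set T}) (C C1 : {set constraint T}) k :
  wf_instance V C -> reduce_step V C V1 C1 ->
  wf_instance V1 C1 /\ (Yinj V C k <-> Yinj V1 C1 k).
Proof.
move=> wf [A [B [D [[AC BC DC [AB AD BD] [eAB eAD]] [eC eV]]]]].
have V1V : V1 \subset V by rewrite eV subsetDl.
have wf1 : wf_instance V1 C1.
  move=> c cC1; have := cC1; rewrite eC inE => /andP[_ cC]; split; first exact: (wf c cC).1.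
  apply/subsetP=> x xc; rewrite eV !inE (subsetP (wf c cC).2) // andbT.
  rewrite negb_and; apply/orP; right; apply/forallPn; exists c.
  by rewrite cC1 xc.
split => //.
have [wA sA] := wf A AC.
have [wB _] := wf B BC.
have [wD _] := wf D DC.
have cnt := fun alpha => count_step (fun c => satisfies alpha c) AC BC DC AB AD BD.
split.
  case=> alpha [inj h]; exists alpha; split.
    by move=> x y /(subsetP V1V) xV /(subsetP V1V) yV; apply: inj.
  have [c1 c2] := cnt alpha.
  have t := triple wA wB wD eAB eAD AB AD BD
              (fun x y xA yA => inj x y (subsetP sA x xA) (subsetP sA y yA)).
  rewrite eC; apply: ar1; move: h; rewrite c1 c2 t.
  by [].
case=> alpha [inj h].
pose M := \sum_(y in V1) alpha y.
pose g x := if x \in V1 then alpha x else M.+1 + enum_rank x.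
have aM : forall y, y \in V1 -> alpha y <= M.
  by move=> y yV; rewrite /M (bigD1 y) //= leq_addr.
have ginj : {in V &, injective g}.
  move=> x y _ _; rewrite /g.
  case xV: (x \in V1); case yV: (y \in V1).
  - exact: inj.
  - by move=> e; case: (ar3 (aM x xV) e).
  - by move=> e; case: (ar3 (aM y yV) (esym e)).
  - by move/addnI/val_inj/enum_rank_inj.
exists g; split => //.
have [c1 c2] := cnt g.
have t := triple wA wB wD eAB eAD AB AD BD
            (fun x y xA yA => ginj x y (subsetP sA x xA) (subsetP sA y yA)).
rewrite c1 c2 t.
have -> : [set c in C :\: [set A; B; D] | satisfies g c] =
          [set c in C1 | satisfies alpha c].
  apply/setP=> c; rewrite -eC !inE; case cC1: (c \in C1) => //=.
  apply: sat_ext => x y xv yv.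
  have [_ s1] := wf1 c cC1.
  by rewrite /g (subsetP s1 x xv) (subsetP s1 y yv).
by rewrite -eC; apply: ar2.
Qed.

Theorem lemma3 (T : finType) (V : {set T}) (C : {set constraint T}) (kappa : nat)
    (V' : {set T}) (C' : {set constraint T}) :
  wf_instance V C ->
  reduces V C V' C' ->
  ~ has_complete_triple C' ->
  (BATLB_yes V C kappa <-> BATLB_yes V' C' kappa).
Proof.
move=> wf red _.
have : wf_instance V' C' /\ (Yinj V C kappa <-> Yinj V' C' kappa).
  elim: red wf => [V0 C0 | V0 C0 V1 C1 V2 C2 st _ IH] wf0.
    by split => //.
  have [wf1 e1] := step kappa wf0 st.
  have [wf2 e2] := IH wf1.
  by split => //; rewrite e1.
case=> wf' e.
by rewrite (conv _ wf) (conv _ wf').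
Qed.
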